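(* For $n\ge1$ and $0\le k<n$, $$|\mathbf{I}_{n,k}(210)|=|\mathbf{I}_{n-1}(210)|-\sum_{l=k+1}^{n-4}\sum_{j=l+1}^{n-3}\sum_{i\le j}|\mathbf{I}_{n-3,i}(210)|.$$ Equivalently, $|\mathbf{I}_{n,k}(210)|=|\mathbf{I}_{n-1}(210)|$ if $1\le n\le4$ or $k>n-5\ge0$, and for $0\le k\le n-5$, $$|\mathbf{I}_{n,k}(210)|=|\mathbf{I}_{n-1}(210)|-\frac12\Big[(n-k-4)(n-k-3)\sum_{i=0}^{k+2}|\mathbf{I}_{n-3,i}(210)|+\sum_{i=k+3}^{n-4}(n-i-2)(n+i-2k-5)|\mathbf{I}_{n-3,i}(210)|\Big].$$
   Context: An inversion sequence of length $n$ is an integer sequence $e=e_1\dots e_n$ with $0\le e_i<i$ for all $i$; $\mathbf{I}_n$ denotes the set of these. $\mathbf{I}_n(210)$ is the set of $e\in\mathbf{I}_n$ with no $i$ such that $e_i>e_{i+1}>e_{i+2}$ (avoiding the consecutive pattern $210$). $\mathbf{I}_{n,k}(210)=\{e\in\mathbf{I}_n(210):e_n=k\}$, empty for $k\ge n$. Conventions: $|\mathbf{I}_0(210)|=1$; empty sums are $0$. *)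

(* Defs.v *)
From mathcomp Require Import all_boot all_order all_algebra.
Set Implicit Arguments. Unset Strict Implicit. Unset Printing Implicit Defensive.

(* An inversion sequence of length n, 0-indexed: e = e_0 ... e_{n-1} with
   e_i <= i (i.e. e_{i+1} < i+1 in the paper's 1-indexing).  Entries are
   stored in 'I_n (values < n), which is no restriction since e_i <= i < n. *)
Definition is_inv_seq (n : nat) (e : n.-tuple 'I_n) : bool :=
  [forall i : 'I_n, (tnth e i : nat) <= i].

Definition avoids210 (n : nat) (e : n.-tuple 'I_n) : bool :=
  [forall i : 'I_n,
     ~~ [&& (i.+2 < n),
            (nth 0 (map val e) i.+1 < nth 0 (map val e) i)
          & (nth 0 (map val e) i.+2 < nth 0 (map val e) i.+1)]].

Definition I210 (n : nat) : {set n.-tuple 'I_n} :=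
  [set e | is_inv_seq e && avoids210 e].

Definition I210k (n k : nat) : {set n.-tuple 'I_n} :=
  [set e in I210 n | last 0 (map val e) == k].

(* |I_n(210)| ; for n = 0 this is 1 (the empty sequence) *)
Definition cI (n : nat) : nat := #|I210 n|.
Definition cIk (n k : nat) : nat := #|I210k n k|.

(* Main.v *)
Require Import Defs.
From mathcomp Require Import all_boot all_order all_algebra.
From mathcomp Require Import zify.
Set Implicit Arguments. Unset Strict Implicit. Unset Printing Implicit Defensive.

Definition inv (s : seq nat) := all (fun i => nth 0 s i <= i) (iota 0 (size s)).
Definition av (s : seq nat) :=
  all (fun i => ~~ ((nth 0 s i.+1 < nth 0 s i) && (nth 0 s i.+2 < nth 0 s i.+1)))
      (iota 0 (size s).-2).
Definition G s := inv s && av s.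
Definition D (s : seq nat) x :=
  [&& 1 < size s, last 0 s < nth 0 s (size s).-2 & x < last 0 s].

Fixpoint invs n : seq (seq nat) :=
  if n is m.+1 then [seq rcons s x | s <- invs m, x <- iota 0 n] else [:: [::]].

Lemma invsS n : invs n.+1 = [seq rcons s x | s <- invs n, x <- iota 0 n.+1].
Proof. by []. Qed.

Lemma size_invs n s : s \in invs n -> size s = n.
Proof.
elim: n s => [|n IH] s; first by rewrite inE => /eqP ->.
rewrite invsS; move/allpairsP => [[t x] [/= Ht _ ->]]; by rewrite size_rcons IH.
Qed.

Lemma uniq_invs n : uniq (invs n).
Proof.
elim: n => [|n IH] //; rewrite invsS; apply: allpairs_uniq => //; first exact: iota_uniq.
by move=> [a b] [c d] _ _ /= /rcons_inj [-> ->].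
Qed.

Lemma inv_rcons s x : inv (rcons s x) = inv s && (x <= size s).
Proof.
rewrite /inv size_rcons -addn1 iotaD add0n /= all_cat /= andbT nth_rcons ltnn eqxx.
congr (_ && _); apply: eq_in_all => i; rewrite mem_iota => /andP [_ Hi].
by rewrite nth_rcons Hi.
Qed.

Lemma av_rcons s x : av (rcons s x) = av s && ~~ D s x.
Proof.
rewrite /av /D size_rcons.
case: (ltnP 1 (size s)) => Hs /=; last first.
  have -> : (size s).+1.-2 = 0 by lia.
  by [].
have -> : (size s).-1 = (size s).-2 + 1 by lia.
rewrite iotaD add0n all_cat /= andbT addn1 /=.
congr (_ && _).
  apply: eq_in_all => i; rewrite mem_iota add0n => /andP [_ Hi].
  have H0 : i < size s by lia.
  have H1 : i.+1 < size s by lia.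
  have H2 : i.+2 < size s by lia.
  by rewrite !nth_rcons H0 H1 H2.
have E1 : (size s).-2.+1 = (size s).-1 by lia.
have E2 : (size s).-2.+2 = size s by lia.
have H0 : (size s).-2 < size s by lia.
have H1 : (size s).-1 < size s by lia.
rewrite E2 E1 !nth_rcons H0 H1 ltnn eqxx nth_last.
by rewrite andbC.
Qed.

Lemma invs_mem s : inv s -> s \in invs (size s).
Proof.
elim/last_ind: s => [|s x IH] //.
rewrite inv_rcons size_rcons invsS => /andP [Hs Hx].
by apply: allpairs_f; [exact: IH | rewrite mem_iota].
Qed.

Lemma mem_invs n s : (s \in invs n) = inv s && (size s == n).
Proof.
apply/idP/idP; last by case/andP => H /eqP <-; exact: invs_mem.
move=> H; rewrite (size_invs H) eqxx andbT.
elim: n s H => [|n IH] s; first by rewrite inE => /eqP ->.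
rewrite invsS; move/allpairsP => [[t x] [Ht Hx ->]].
rewrite mem_iota in Hx; rewrite /= in Ht Hx.
by rewrite inv_rcons IH // (size_invs Ht) -ltnS.
Qed.

Lemma nth_val n (e : n.-tuple 'I_n) (i : 'I_n) : nth 0 (map val e) i = tnth e i.
Proof. by rewrite (nth_map i) ?size_tuple // -tnth_nth. Qed.

Lemma is_inv_seqE n (e : n.-tuple 'I_n) : is_inv_seq e = inv (map val e).
Proof.
rewrite /is_inv_seq /inv size_map size_tuple.
apply/forallP/allP => [H i | H i].
  rewrite mem_iota add0n => /andP [_ Hi].
  by have := H (Ordinal Hi); rewrite -nth_val.
by have := H i; rewrite mem_iota ltn_ord nth_val; apply.
Qed.

Lemma avoids210E n (e : n.-tuple 'I_n) : avoids210 e = av (map val e).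
Proof.
rewrite /avoids210 /av size_map size_tuple.
apply/forallP/allP => [H i | H i].
  rewrite mem_iota add0n => /andP [_ Hi].
  have Hin : i < n by lia.
  have Hi2 : i.+2 < n by lia.
  by move: (H (Ordinal Hin)); rewrite /= Hi2.
have [Hi2|Hi2] := boolP (i.+2 < n); last by [].
apply: H; rewrite mem_iota; lia.
Qed.

Lemma tuple_of_seq n (s : seq nat) :
  size s = n -> all (fun x => x < n) s -> exists e : n.-tuple 'I_n, map val e = s.
Proof.
case: n => [|m] Hs Ha.
  by exists [tuple]; case: s Hs Ha.
have Ht : size (map (@inord m) s) == m.+1 by rewrite size_map Hs.
exists (Tuple Ht) => /=; rewrite -map_comp; apply: map_id_in.
by move=> x Hx /=; apply: inordK; exact: (allP Ha).
Qed.

Lemma inv_lt s : inv s -> all (fun x => x < size s) s.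
Proof.
move=> Is; apply/allP => x /(nthP 0) [i Hi <-].
have := allP Is i; rewrite mem_iota add0n Hi => /(_ isT) H; exact: leq_ltn_trans H Hi.
Qed.

Lemma card_bridge n (R : pred (seq nat)) : (forall s, R s -> inv s) ->
  #|[pred e : n.-tuple 'I_n | R (map val e)]| = count R (invs n).
Proof.
move=> HR.
rewrite cardE /enum_mem size_filter -enumT.
transitivity (count R (map (fun e : n.-tuple 'I_n => map val e) (enum {: n.-tuple 'I_n}))).
  by rewrite count_map.
rewrite -!size_filter; apply: perm_size; apply: uniq_perm.
- rewrite filter_uniq // map_inj_uniq ?enum_uniq //.
  by move=> e1 e2 /(inj_map val_inj) H; apply: val_inj.
- by rewrite filter_uniq // uniq_invs.
move=> s; rewrite !mem_filter mem_invs; case Rs: (R s) => //=.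
have Is := HR _ Rs; rewrite Is /=.
apply/mapP/eqP => [[e _ ->] | Hsz]; first by rewrite size_map size_tuple.
have Hl := inv_lt Is; rewrite Hsz in Hl.
have [e He] := tuple_of_seq Hsz Hl.
by exists e; rewrite ?mem_enum.
Qed.

Lemma cIE n : cI n = count G (invs n).
Proof.
rewrite /cI /I210 -(@card_bridge n G); last by move=> s /andP [].
by apply: eq_card => e; rewrite inE /= is_inv_seqE avoids210E.
Qed.

Lemma cIkE n k : cIk n k = count (fun s => G s && (last 0 s == k)) (invs n).
Proof.
rewrite /cIk /I210k -(@card_bridge n (fun s => G s && (last 0 s == k))); last first.
  by move=> s /andP [/andP []].
by apply: eq_card => e; rewrite !inE /= is_inv_seqE avoids210E.
Qed.

Lemma count_sum (T : Type) (a : pred T) l : count a l = \sum_(x <- l) (a x : nat).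
Proof. by elim: l => [|x l IH]; rewrite ?big_nil ?big_cons //= IH. Qed.

Lemma sum_invsS (F : seq nat -> nat) m :
  \sum_(s <- invs m.+1) F s = \sum_(s <- invs m) \sum_(0 <= x < m.+1) F (rcons s x).
Proof. by rewrite invsS big_allpairs_dep. Qed.

Lemma sum_pick N k (b : nat -> bool) : k < N ->
  \sum_(0 <= x < N) (b x && (x == k) : nat) = b k.
Proof.
move=> Hk; rewrite (bigD1_seq k) ?iota_uniq ?mem_iota ?subn0 ?add0n //=.
rewrite big1 => [|i /negbTE ->]; last by rewrite andbF.
by rewrite addn0 (eq_refl k) andbT.
Qed.

Lemma sum_eq_le N x (b : bool) :
  \sum_(0 <= i < N) (b && (x == i) : nat) = b && (x < N).
Proof.
case: b => /=; last by rewrite big1.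
case: (ltnP x N) => Hx.
  rewrite (bigD1_seq x) ?iota_uniq ?mem_iota ?subn0 ?add0n //=.
  rewrite big1 => [|i]; first by rewrite addn0 (eq_refl x).
  by rewrite eq_sym => /negbTE ->.
rewrite big1_seq // => i /andP [_]; rewrite mem_iota => /andP [_ Hi].
by case: eqP => // E; subst; lia.
Qed.

Lemma sum_range a b N F : b <= N ->
  \sum_(a <= i < b) F i = \sum_(0 <= i < N) ((a <= i) && (i < b)) * F i.
Proof.
move=> HbN.
rewrite (big_nat_widenl _ _ _ _ _ (leq0n a)) (big_nat_widen _ _ _ _ _ HbN).
rewrite big_mkcond; apply: eq_bigr => i _ /=.
by case: (a <= i); case: (i < b); rewrite ?mul1n ?mul0n.
Qed.

Lemma sum_id (c : nat -> nat) q k :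
  \sum_(k.+1 <= l < q) \sum_(l.+1 <= j < q.+1) c j =
  \sum_(0 <= z < q.+1) \sum_(0 <= y < q.+2) ((y < z) && (k < y)) * c z.
Proof.
rewrite exchange_big_nat.
rewrite (@sum_range _ _ q.+2); last by rewrite ltnW.
apply: eq_big_nat => l /andP [_ Hl].
rewrite (@sum_range _ _ q.+1) // big_distrr /=.
apply: eq_big_nat => j /andP [_ Hj].
rewrite Hj andbT.
case: (ltnP l j) => H1; case: (ltnP k l) => H2; case: (ltnP l q) => H3 //=;
  rewrite ?mul1n ?mul0n ?muln0 //; lia.
Qed.

Lemma D_rcons u a x : D (rcons u a) x = [&& 0 < size u, a < last 0 u & x < a].
Proof.
rewrite /D size_rcons last_rcons ltnS.
case: u => [|b u] //=.
have -> : b :: rcons u a = rcons (b :: u) a by [].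
rewrite nth_rcons /= ltnSn.
by rewrite (_ : size u = (size (b :: u)).-1) // nth_last.
Qed.

Lemma G_rcons s x : G (rcons s x) = [&& G s, x <= size s & ~~ D s x].
Proof.
rewrite /G inv_rcons av_rcons.
by case: (inv s); case: (x <= size s); case: (av s).
Qed.

Lemma term_eq u q z y k : size u = q -> z < q.+1 ->
  (G (rcons (rcons u z) y) && D (rcons (rcons u z) y) k : nat) =
  ((y < z) && (k < y)) * (G u && (last 0 u <= z)).
Proof.
move=> Hu Hz.
rewrite !G_rcons !D_rcons !size_rcons last_rcons Hu.
case: (ltnP y z) => H1; case: (ltnP k y) => H2; rewrite /= ?andbF ?mul0n //.
have -> : y <= q.+1 by lia.
have -> : z <= q by lia.
rewrite mul1n !andbT.
case: q Hu Hz => [|q] Hu Hz; first by lia.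
rewrite /= /D.
case: (ltnP z (last 0 u)) => H3 /=; first by rewrite !andbF.
by rewrite !andbF !andbT.
Qed.

Lemma main_nat n k : 1 <= n -> k < n ->
  cIk n k + \sum_(k.+1 <= l < n - 3) \sum_(l.+1 <= j < n - 2)
      \sum_(0 <= i < j.+1) cIk (n - 3) i = cI n.-1.
Proof.
case: n => [|m] // _ Hk.
have step : cIk m.+1 k + count (fun s => G s && D s k) (invs m) = cI m.
  rewrite cIkE cIE !count_sum sum_invsS -big_split /=.
  apply: eq_big_seq => s Hs.
  rewrite (eq_bigr (fun x => (G (rcons s x) && (x == k) : nat))); last first.
    by move=> x _; rewrite last_rcons.
  rewrite sum_pick // G_rcons (size_invs Hs) (_ : k <= m) //.
  by case: (G s); case: (D s k).
rewrite -step /=; congr (_ + _).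
case: m Hk step => [|[|q]] Hk step.
- by rewrite big_geq // count_sum big1_seq // => s /andP [_ Hs]; rewrite /D (size_invs Hs) /=.
- by rewrite big_geq // count_sum big1_seq // => s /andP [_ Hs]; rewrite /D (size_invs Hs) /=.
have -> : q.+3 - 3 = q by lia.
have -> : q.+3 - 2 = q.+1 by lia.
transitivity (\sum_(k.+1 <= l < q) \sum_(l.+1 <= j < q.+1)
                \sum_(u <- invs q) (G u && (last 0 u <= j) : nat)).
  apply: eq_bigr => l _; apply: eq_bigr => j _.
  rewrite (eq_bigr (fun i => \sum_(u <- invs q) (G u && (last 0 u == i) : nat))); last first.
    by move=> i _; rewrite cIkE count_sum.
  rewrite exchange_big; apply: eq_bigr => u _.
  by rewrite sum_eq_le ltnS.
under eq_bigr => l _ do rewrite exchange_big.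
rewrite exchange_big.
rewrite count_sum !sum_invsS.
apply: eq_big_seq => u Hu.
rewrite sum_id.
apply: eq_big_nat => z /andP [_ Hz].
apply: eq_big_nat => y _.
by rewrite (@term_eq u q) // (size_invs Hu).
Qed.

Import GRing.Theory.
Local Open Scope ring_scope.

Theorem mainTheorem15 (n k : nat) (hn : (1 <= n)%N) (hk : (k < n)%N) :
  (cIk n k)%:Z =
    (cI n.-1)%:Z -
    (\sum_(k.+1 <= l < n - 3) \sum_(l.+1 <= j < n - 2) \sum_(0 <= i < j.+1)
        cIk (n - 3) i)%:Z.
Proof.
by rewrite -(main_nat hn hk) PoszD addrK.
Qed.
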